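(* Let $p \geq 2$ be a large prime and let $\tau$ be a primitive root modulo $p$. Then for any arbitrarily small number $\varepsilon \in (0, 1/16)$, \[ \max_{\gcd(s,p-1)=1} \left| \sum_{\substack{1 \leq n \leq p-1\\ \gcd(n,p-1)=1}} e^{2\pi i s \tau^n / p} \right| \ll p^{1-\varepsilon}. \] *)

(* Defs.v *)
From Stdlib Require Import Reals Arith List ZArith Znumtheory.
Import ListNotations.
Open Scope R_scope.

Definition prim_root (p t : nat) : Prop :=
  Nat.gcd t p = 1%nat /\ Nat.modulo (t ^ (p - 1)) p = 1%nat /\
  (forall k : nat, (1 <= k)%nat -> (k < p - 1)%nat -> Nat.modulo (t ^ k) p <> 1%nat).

Definition idx (p : nat) : list nat :=
  filter (fun n => Nat.eqb (Nat.gcd n (p - 1)) 1) (seq 1 (p - 1)).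

Definition expsum_re (p s t : nat) : R :=
  fold_right Rplus 0 (map (fun n => cos (2 * PI * INR s * INR (t ^ n) / INR p)) (idx p)).
Definition expsum_im (p s t : nat) : R :=
  fold_right Rplus 0 (map (fun n => sin (2 * PI * INR s * INR (t ^ n) / INR p)) (idx p)).

Definition expsum_abs (p s t : nat) : R :=
  sqrt (expsum_re p s t ^ 2 + expsum_im p s t ^ 2).

(* Main.v *)
Require Import Defs.
From Stdlib Require Import Reals Arith List ZArith Znumtheory Lia Lra Classical.
Open Scope R_scope.


Fixpoint sm (f : nat -> R) (n : nat) : R :=
  match n with O => 0 | S k => sm f k + f k end.

Lemma sm_ext f g n : (forall i, (i < n)%nat -> f i = g i) -> sm f n = sm g n.
Proof. induction n; simpl; intros H; auto. rewrite IHn, H; auto. Qed.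

Lemma sm_plus f g n : sm (fun i => f i + g i) n = sm f n + sm g n.
Proof. induction n; simpl; [lra|]. rewrite IHn; lra. Qed.

Lemma sm_minus f g n : sm (fun i => f i - g i) n = sm f n - sm g n.
Proof. induction n; simpl; [lra|]. rewrite IHn; lra. Qed.

Lemma sm_scal c f n : sm (fun i => c * f i) n = c * sm f n.
Proof. induction n; simpl; [lra|]. rewrite IHn; lra. Qed.

Lemma sm_scalr c f n : sm (fun i => f i * c) n = sm f n * c.
Proof. induction n; simpl; [lra|]. rewrite IHn; lra. Qed.

Lemma sm_zero f n : (forall i, (i < n)%nat -> f i = 0) -> sm f n = 0.
Proof. induction n; simpl; intros H; auto. rewrite IHn, H; auto; lra. Qed.

Lemma sm_const c n : sm (fun _ => c) n = INR n * c.
Proof. induction n; simpl sm; [simpl; lra|]. rewrite IHn, S_INR; lra. Qed.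

Lemma sm_le f g n : (forall i, (i < n)%nat -> f i <= g i) -> sm f n <= sm g n.
Proof. induction n; simpl; intros H; [lra|]. apply Rplus_le_compat; auto. Qed.

Lemma sm_nonneg f n : (forall i, (i < n)%nat -> 0 <= f i) -> 0 <= sm f n.
Proof. induction n; simpl; intros H; [lra|]. assert (0 <= f n) by auto. assert (0 <= sm f n) by auto. lra. Qed.

Lemma sm_add f a b : sm f (a + b) = sm f a + sm (fun i => f (a + i)%nat) b.
Proof. induction b; simpl. rewrite Nat.add_0_r; lra. rewrite Nat.add_succ_r; simpl. rewrite IHb; lra. Qed.

Lemma sm_shift f n : sm f (S n) = f O + sm (fun i => f (S i)) n.
Proof. induction n. simpl; lra. change (sm f (S (S n))) with (sm f (S n) + f (S n)). rewrite IHn. simpl. lra. Qed.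

Lemma sm_mul f g n m : sm f n * sm g m = sm (fun i => sm (fun j => f i * g j) m) n.
Proof. induction n; simpl; [lra|]. rewrite <- IHn, sm_scal. lra. Qed.

Lemma sm_swap F n m : sm (fun i => sm (fun j => F i j) m) n = sm (fun j => sm (fun i => F i j) n) m.
Proof. induction n; simpl. rewrite sm_zero; auto. rewrite IHn, <- sm_plus. reflexivity. Qed.

Lemma sm_delta (c : nat -> R) i n : (i < n)%nat -> sm (fun a => if Nat.eqb i a then c a else 0) n = c i.
Proof.
  induction n; intros H; [lia|]. simpl.
  destruct (Nat.eq_dec i n) as [->|Hne].
  - rewrite Nat.eqb_refl, sm_zero. lra. intros j Hj. destruct (Nat.eqb_spec n j); [lia|auto].
  - rewrite IHn by lia. destruct (Nat.eqb_spec i n); [lia|lra].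
Qed.

Lemma fold_filter (f : nat -> R) (P : nat -> bool) n k :
  fold_right Rplus 0 (map f (filter P (seq k n))) = sm (fun i => if P (k + i)%nat then f (k + i)%nat else 0) n.
Proof.
  revert k; induction n; intros k; [reflexivity|].
  rewrite sm_shift, Nat.add_0_r. simpl seq. simpl filter. destruct (P k) eqn:E; simpl; rewrite IHn;
  [f_equal|rewrite Rplus_0_l]; apply sm_ext; intros i _; rewrite Nat.add_succ_r; reflexivity.
Qed.

Lemma count_le1 (sg : nat -> nat) a K :
  (forall i j, (i < K)%nat -> (j < K)%nat -> sg i = sg j -> i = j) ->
  sm (fun i => if Nat.eqb (sg i) a then 1 else 0) K <= 1.
Proof.
  induction K; intros Hinj; simpl; [lra|].
  destruct (Nat.eqb_spec (sg K) a).
  - rewrite sm_zero. lra. intros i Hi. destruct (Nat.eqb_spec (sg i) a); auto.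
    assert (i = K) by (apply Hinj; lia). lia.
  - assert (sm (fun i => if Nat.eqb (sg i) a then 1 else 0) K <= 1) by (apply IHK; intros; apply Hinj; auto; lia). lra.
Qed.

Lemma subset_sum (F : nat -> R) (sg : nat -> nat) K p :
  (forall a, 0 <= F a) -> (forall i, (i < K)%nat -> (sg i < p)%nat) ->
  (forall i j, (i < K)%nat -> (j < K)%nat -> sg i = sg j -> i = j) ->
  sm (fun i => F (sg i)) K <= sm F p.
Proof.
  intros HF Hr Hinj.
  rewrite (sm_ext _ (fun i => sm (fun a => if Nat.eqb (sg i) a then F a else 0) p) K).
  2:{ intros i Hi. rewrite sm_delta; auto. }
  rewrite sm_swap. apply sm_le. intros a Ha.
  rewrite (sm_ext _ (fun i => (if Nat.eqb (sg i) a then 1 else 0) * F a)).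
  2:{ intros i _. destruct (Nat.eqb (sg i) a); lra. }
  rewrite sm_scalr. pose proof (count_le1 sg a K Hinj). specialize (HF a).
  assert (0 <= sm (fun i => if Nat.eqb (sg i) a then 1 else 0) K).
  { apply sm_nonneg. intros; destruct Nat.eqb; lra. }
  nra.
Qed.

Definition Md (x y : R) := sqrt (x ^ 2 + y ^ 2).

Lemma sq2_nonneg x y : 0 <= x ^ 2 + y ^ 2.
Proof. assert (H1 := pow2_ge_0 x). assert (H2 := pow2_ge_0 y). lra. Qed.

Lemma Md_tri a b c d : Md (a - b) (c - d) <= Md a c + Md b d.
Proof.
  unfold Md.
  assert (H1 := sqrt_pos (a^2+c^2)). assert (H2 := sqrt_pos (b^2+d^2)).
  apply Rsqr_incr_0_var; [|lra]. unfold Rsqr.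
  rewrite sqrt_sqrt by apply sq2_nonneg.
  assert (Hs1 := sqrt_sqrt (a^2+c^2) (sq2_nonneg a c)). assert (Hs2 := sqrt_sqrt (b^2+d^2) (sq2_nonneg b d)).
  assert (-(a*b + c*d) <= sqrt (a^2+c^2) * sqrt (b^2+d^2)).
  { rewrite <- sqrt_mult by apply sq2_nonneg. apply Rsqr_incr_0_var.
    unfold Rsqr. rewrite sqrt_sqrt. assert (0 <= (a*d-b*c)^2) by apply pow2_ge_0. simpl in *. nra.
    apply Rmult_le_pos; apply sq2_nonneg. apply sqrt_pos. }
  set (S1 := sqrt (a^2+c^2)) in *. set (S2 := sqrt (b^2+d^2)) in *.
  assert (E: (S1 + S2) * (S1 + S2) = S1*S1 + S2*S2 + 2*(S1*S2)) by ring.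
  rewrite E, Hs1, Hs2.
  assert (E2: (a - b) ^ 2 + (c - d) ^ 2 = a ^ 2 + c ^ 2 + (b ^ 2 + d ^ 2) - 2 * (a*b+c*d)) by ring.
  rewrite E2. lra.
Qed.


Definition nprime (p : nat) : Prop :=
  (2 <= p)%nat /\ forall d, Nat.divide d p -> d = 1%nat \/ d = p.

Lemma np_euclid p a b : nprime p -> Nat.divide p (a * b) -> Nat.divide p a \/ Nat.divide p b.
Proof.
  intros [H2 Hp] Hd. destruct (classic (Nat.divide p a)) as [|Hn]; [auto|right].
  destruct (Hp (Nat.gcd p a) (Nat.gcd_divide_l p a)) as [E|E].
  - eapply Nat.gauss; eauto.
  - exfalso; apply Hn. rewrite <- E. apply Nat.gcd_divide_r.
Qed.

Lemma np_pow p a n : nprime p -> Nat.divide p (a ^ n) -> Nat.divide p a.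
Proof.
  intros Hp. induction n; simpl; intros H.
  - apply Nat.divide_1_r in H. destruct Hp; lia.
  - destruct (np_euclid p a (a ^ n) Hp H); auto.
Qed.

Lemma mod_eq_div p a b : p <> 0%nat -> (a mod p = b mod p)%nat -> (b <= a)%nat -> Nat.divide p (a - b).
Proof.
  intros Hp E Hle. exists (a / p - b / p)%nat.
  rewrite Nat.mul_sub_distr_r.
  pose proof (Nat.div_mod_eq a p). pose proof (Nat.div_mod_eq b p).
  rewrite (Nat.mul_comm (a/p)), (Nat.mul_comm (b/p)). lia.
Qed.

Section Exps.
Variable p : nat.
Hypothesis Hp : nprime p.

Lemma p_ne0 : p <> 0%nat.
Proof. destruct Hp; lia. Qed.
Lemma INRp_pos : 0 < INR p.
Proof. apply lt_0_INR. destruct Hp; lia. Qed.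

Definition Ec (x : nat) := cos (2 * PI * INR x / INR p).
Definition Es (x : nat) := sin (2 * PI * INR x / INR p).

Lemma E_mod0 x : Ec x = Ec (x mod p) /\ Es x = Es (x mod p).
Proof.
  pose proof INRp_pos.
  assert (E : 2 * PI * INR x / INR p = 2 * PI * INR (x mod p) / INR p + 2 * INR (x / p) * PI).
  { rewrite (Nat.div_mod_eq x p) at 1. rewrite plus_INR, mult_INR. field. lra. }
  unfold Ec, Es. rewrite E, cos_period, sin_period. auto.
Qed.

Lemma E_mod x y : (x mod p = y mod p)%nat -> Ec x = Ec y /\ Es x = Es y.
Proof.
  intros H. destruct (E_mod0 x) as [A B]. destruct (E_mod0 y) as [C D].
  rewrite A, B, C, D, H. auto.
Qed.

Lemma telescope th n :
  2 * sin (th / 2) * sm (fun a => cos (INR a * th)) n = sin (INR n * th - th / 2) + sin (th / 2).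
Proof.
  induction n.
  - simpl sm. replace (INR 0 * th - th / 2) with (- (th / 2)) by (simpl; ring). rewrite sin_neg. ring.
  - simpl sm. rewrite Rmult_plus_distr_l, IHn, S_INR.
    assert (E1 : (INR n + 1) * th - th / 2 = INR n * th + th / 2) by field.
    assert (E2 : INR n * th - th / 2 = INR n * th + - (th / 2)) by field.
    rewrite E1, E2.
    rewrite !sin_plus, sin_neg, cos_neg. ring.
Qed.

Lemma orth z : ~ Nat.divide p z ->
  sm (fun a => cos (INR a * (2 * PI * INR z / INR p))) p = 0.
Proof.
  intros Hz. pose proof INRp_pos. set (th := 2 * PI * INR z / INR p).
  assert (Hs : sin (th / 2) <> 0).
  { intros H0. apply sin_eq_0_0 in H0. destruct H0 as [k Hk]. apply Hz.
    assert (E : INR z = IZR k * INR p).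
    { unfold th in Hk. assert (PI > 0) by apply PI_RGT_0.
      replace (INR z) with ((2 * PI * INR z / INR p / 2) * INR p / PI) by (field; lra).
      rewrite Hk. field; lra. }
    rewrite !INR_IZR_INZ, <- mult_IZR in E. apply eq_IZR in E.
    apply Nat.Lcm0.mod_divide. apply Nat2Z.inj. rewrite Nat2Z.inj_mod, E. simpl.
    apply Z.mod_mul. pose proof p_ne0. lia. }
  assert (T := telescope th p).
  assert (E : INR p * th - th / 2 = - (th / 2) + 2 * INR z * PI).
  { unfold th. field. lra. }
  rewrite E, sin_period, sin_neg in T.
  apply (Rmult_eq_reg_l (2 * sin (th / 2))); [|lra]. rewrite T. ring.
Qed.

End Exps.


Section Sub.
Variable p : nat.
Hypothesis Hp : nprime p.
Variables h K : nat.
Hypothesis HhK : (h ^ K mod p = 1)%nat.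
Hypothesis HK : (1 <= K)%nat.
Hypothesis Hord : forall k, (1 <= k)%nat -> (k < K)%nat -> (h ^ k mod p <> 1)%nat.

Lemma p2 : (2 <= p)%nat.
Proof. destruct Hp; auto. Qed.

Lemma h_ne0 : h <> 0%nat.
Proof. intros ->. rewrite Nat.pow_0_l in HhK by lia. rewrite Nat.Div0.mod_0_l in HhK. lia. Qed.

Lemma p_ndiv_h : ~ Nat.divide p h.
Proof.
  intros [c Hc]. rewrite Hc in HhK.
  assert (E : ((c * p) ^ K = (c * (c * p) ^ (K - 1)) * p)%nat).
  { replace K with (S (K - 1)) at 1 by lia. simpl. ring. }
  rewrite E, Nat.Div0.mod_mul in HhK. lia.
Qed.

Lemma inj_key c i i' : ~ Nat.divide p c -> (i < i')%nat -> (i' - i < K)%nat ->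
  ~ Nat.divide p (c * h ^ i' - c * h ^ i).
Proof.
  intros Hc Hi Hi' Hd.
  replace i' with (i + (i' - i))%nat in Hd by lia. rewrite Nat.pow_add_r in Hd.
  set (d := (i' - i)%nat) in *.
  replace (c * (h ^ i * h ^ d) - c * h ^ i)%nat with ((c * h ^ i) * (h ^ d - 1))%nat in Hd
    by (rewrite Nat.mul_sub_distr_l; rewrite Nat.mul_1_r, Nat.mul_assoc; reflexivity).
  destruct (np_euclid _ _ _ Hp Hd) as [H1|H1].
  - destruct (np_euclid _ _ _ Hp H1) as [H2|H2]; auto.
    apply np_pow in H2; auto. apply p_ndiv_h; auto.
  - apply (Hord d); [lia|lia|]. assert (h ^ d <> 0)%nat by (apply Nat.pow_nonzero, h_ne0).
    destruct H1 as [e He]. replace (h ^ d)%nat with (1 + e * p)%nat by lia.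
    rewrite Nat.Div0.mod_add. apply Nat.mod_small. pose proof p2; lia.
Qed.

Definition Sc a := sm (fun j => Ec p (a * h ^ S j)) K.
Definition Ss a := sm (fun j => Es p (a * h ^ S j)) K.
Definition N a := Sc a ^ 2 + Ss a ^ 2.

Lemma rot a : Sc (a * h) = Sc a /\ Ss (a * h) = Ss a.
Proof.
  assert (Hm : ((a * h * h ^ K) mod p = (a * h) mod p)%nat).
  { rewrite Nat.Div0.mul_mod, HhK, Nat.mul_1_r. apply Nat.Div0.mod_mod. }
  destruct (E_mod p Hp _ _ Hm) as [E1 E2].
  unfold Sc, Ss. split.
  - set (g := fun j => Ec p (a * h ^ S j)). pose proof (sm_shift g K) as A.
    change (sm g (S K)) with (sm g K + g K) in A. unfold g in A; cbv beta in A.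
    transitivity (sm (fun i => Ec p (a * h ^ S (S i))) K).
    { apply sm_ext; intros i _. f_equal. rewrite (Nat.pow_succ_r' h (S i)). ring. }
    assert (Ec p (a * h ^ S K) = Ec p (a * h ^ 1)).
    { rewrite Nat.pow_1_r, <- E1. f_equal. rewrite Nat.pow_succ_r'. ring. }
    unfold g; lra.
  - set (g := fun j => Es p (a * h ^ S j)). pose proof (sm_shift g K) as A.
    change (sm g (S K)) with (sm g K + g K) in A. unfold g in A; cbv beta in A.
    transitivity (sm (fun i => Es p (a * h ^ S (S i))) K).
    { apply sm_ext; intros i _. f_equal. rewrite (Nat.pow_succ_r' h (S i)). ring. }
    assert (Es p (a * h ^ S K) = Es p (a * h ^ 1)).
    { rewrite Nat.pow_1_r, <- E2. f_equal. rewrite Nat.pow_succ_r'. ring. }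
    unfold g; lra.
Qed.

Lemma rotN a i : N (a * h ^ i) = N a.
Proof.
  induction i. simpl. rewrite Nat.mul_1_r. auto.
  replace (a * h ^ S i)%nat with (a * h ^ i * h)%nat by (rewrite Nat.pow_succ_r'; ring).
  unfold N in *. destruct (rot (a * h ^ i)%nat) as [A B]. rewrite A, B. auto.
Qed.

Lemma N_expand a : N a = sm (fun j => sm (fun j' =>
  cos (2 * PI * INR (a * h ^ S j) / INR p - 2 * PI * INR (a * h ^ S j') / INR p)) K) K.
Proof.
  unfold N, Sc, Ss. rewrite <- !Rsqr_pow2. unfold Rsqr. rewrite !sm_mul, <- sm_plus.
  apply sm_ext; intros j _. rewrite <- sm_plus. apply sm_ext; intros j' _.
  rewrite cos_minus. unfold Ec, Es. reflexivity.
Qed.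

Lemma inner j j' : (j < K)%nat -> (j' < K)%nat ->
  sm (fun a => cos (2 * PI * INR (a * h ^ S j) / INR p - 2 * PI * INR (a * h ^ S j') / INR p)) p
  = if Nat.eqb j j' then INR p else 0.
Proof.
  intros Hj Hj'. pose proof (INRp_pos p Hp).
  assert (H1 : ~ Nat.divide p 1) by (intros Hd; apply Nat.divide_1_r in Hd; pose proof p2; lia).
  destruct (Nat.eqb_spec j j') as [<-|Hne].
  - rewrite (sm_ext _ (fun _ => 1)). rewrite sm_const; ring.
    intros a _. rewrite Rminus_diag, cos_0. reflexivity.
  - assert (Hh := h_ne0).
    destruct (Nat.lt_gt_cases j j') as [Hne2 _]. destruct (Hne2 Hne) as [Hl|Hl].
    + assert (Hz := inj_key 1 (S j) (S j') H1 ltac:(lia) ltac:(lia)).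
      rewrite !Nat.mul_1_l in Hz.
      assert (Hle : (h ^ S j <= h ^ S j')%nat) by (apply Nat.pow_le_mono_r; lia).
      rewrite <- (orth p Hp _ Hz). apply sm_ext; intros a _.
      rewrite <- cos_neg. f_equal. rewrite minus_INR, !mult_INR by auto. field. lra.
    + assert (Hz := inj_key 1 (S j') (S j) H1 ltac:(lia) ltac:(lia)).
      rewrite !Nat.mul_1_l in Hz.
      assert (Hle : (h ^ S j' <= h ^ S j)%nat) by (apply Nat.pow_le_mono_r; lia).
      rewrite <- (orth p Hp _ Hz). apply sm_ext; intros a _.
      f_equal. rewrite minus_INR, !mult_INR by auto. field. lra.
Qed.

Lemma parseval : sm N p = INR p * INR K.
Proof.
  rewrite (sm_ext N _ p (fun a _ => N_expand a)), sm_swap.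
  rewrite (sm_ext _ (fun j => INR p)). rewrite sm_const; ring.
  intros j Hj. rewrite sm_swap.
  rewrite (sm_ext _ (fun j' => if Nat.eqb j j' then INR p else 0)).
  apply (sm_delta (fun _ => INR p)); auto.
  intros j' Hj'. apply inner; auto.
Qed.

Lemma N_nonneg a : 0 <= N a.
Proof. apply sq2_nonneg. Qed.

Lemma sub_bound s : ~ Nat.divide p s -> N s <= INR p.
Proof.
  intros Hs. pose proof p2 as Hp2. pose proof (p_ne0 p Hp) as Hp0.
  set (sg := fun i => ((s * h ^ i) mod p)%nat).
  assert (Hinj : forall i j, (i < K)%nat -> (j < K)%nat -> sg i = sg j -> i = j).
  { intros i j Hi Hj E. unfold sg in E.
    destruct (Nat.eq_dec i j) as [|Hne]; auto; exfalso. destruct (proj1 (Nat.lt_gt_cases i j) Hne) as [Hl|Hl].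
    + apply (inj_key s i j Hs Hl ltac:(lia)). apply mod_eq_div; auto.
      apply Nat.mul_le_mono_l, Nat.pow_le_mono_r; [apply h_ne0|lia].
    + apply (inj_key s j i Hs Hl ltac:(lia)). apply mod_eq_div; auto.
      apply Nat.mul_le_mono_l, Nat.pow_le_mono_r; [apply h_ne0|lia]. }
  assert (Hsub := subset_sum N sg K p N_nonneg
    (fun i _ => Nat.mod_upper_bound _ _ Hp0) Hinj).
  rewrite parseval in Hsub.
  rewrite (sm_ext _ (fun _ => N s)) in Hsub.
  - rewrite sm_const in Hsub. assert (0 < INR K) by (apply lt_0_INR; lia). nra.
  - intros i _. unfold sg. rewrite <- (rotN s i). unfold N, Sc, Ss.
    f_equal; f_equal; apply sm_ext; intros j _;
      apply (E_mod p Hp); apply Nat.Div0.mul_mod_idemp_l.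
Qed.

Lemma sub_bound_Md s : ~ Nat.divide p s -> Md (Sc s) (Ss s) <= sqrt (INR p).
Proof. intros Hs. unfold Md. apply sqrt_le_1_alt. apply sub_bound; auto. Qed.

End Sub.


Definition CS (psi : nat -> R) (m D : nat) : R :=
  sm (fun i => if Nat.eqb (Nat.gcd (S i) D) 1 then psi (S i) else 0) m.

Lemma CS_ext psi psi' m D : (forall n, psi n = psi' n) -> CS psi m D = CS psi' m D.
Proof. intros H. unfold CS. apply sm_ext. intros i _. rewrite H. reflexivity. Qed.

Lemma gcd_1 n : Nat.gcd n 1 = 1%nat.
Proof. apply Nat.divide_1_r, Nat.gcd_divide_r. Qed.

Lemma cop_mul n a b : Nat.gcd n (a * b) = 1%nat <-> Nat.gcd n a = 1%nat /\ Nat.gcd n b = 1%nat.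
Proof.
  split.
  - intros H. split; apply Nat.divide_1_r; rewrite <- H; apply Nat.gcd_greatest;
      try apply Nat.gcd_divide_l.
    + apply Nat.divide_mul_l, Nat.gcd_divide_r.
    + apply Nat.divide_mul_r, Nat.gcd_divide_r.
  - intros [Ha Hb]. set (g := Nat.gcd n (a * b)).
    assert (Hga : Nat.gcd g a = 1%nat).
    { apply Nat.divide_1_r. rewrite <- Ha. apply Nat.gcd_greatest.
      - eapply Nat.divide_trans; [apply Nat.gcd_divide_l|apply Nat.gcd_divide_l].
      - apply Nat.gcd_divide_r. }
    assert (Hgb : Nat.divide g b) by (eapply Nat.gauss; [apply Nat.gcd_divide_r|exact Hga]).
    apply Nat.divide_1_r. rewrite <- Hb. apply Nat.gcd_greatest; auto. apply Nat.gcd_divide_l.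
Qed.

Lemma cop_prime q n : nprime q -> (Nat.gcd n q = 1%nat <-> ~ Nat.divide q n).
Proof.
  intros [Hq2 Hq]. split.
  - intros H Hd. assert (Nat.divide q 1) by (rewrite <- H; apply Nat.gcd_greatest; auto; apply Nat.divide_refl).
    apply Nat.divide_1_r in H0. lia.
  - intros Hn. destruct (Hq _ (Nat.gcd_divide_r n q)) as [E|E]; auto.
    exfalso; apply Hn. rewrite <- E. apply Nat.gcd_divide_l.
Qed.

Lemma sm_S f n : sm f (S n) = sm f n + f n.
Proof. reflexivity. Qed.

Lemma reindex (phi : nat -> R) q k : (1 <= q)%nat ->
  sm (fun i => if Nat.eqb (S i mod q) 0 then phi (S i) else 0) (q * k) = sm (fun j => phi (q * S j)%nat) k.
Proof.
  intros Hq. induction k.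
  - rewrite Nat.mul_0_r. reflexivity.
  - rewrite Nat.mul_succ_r, sm_add, IHk, sm_S. f_equal.
    destruct q as [|q']; [lia|]. rewrite sm_S.
    rewrite sm_zero.
    + replace (S (S q' * k + q'))%nat with (S q' * S k)%nat by lia.
      rewrite (Nat.mul_comm (S q') (S k)), Nat.Div0.mod_mul. simpl Nat.eqb. lra.
    + intros i Hi. replace (S (S q' * k + i))%nat with (S i + k * S q')%nat by lia.
      rewrite Nat.Div0.mod_add, Nat.mod_small by lia. reflexivity.
Qed.

Lemma rec_split psi q D' k : nprime q -> ~ Nat.divide q D' ->
  CS psi (q * k) (q * D') = CS psi (q * k) D' - CS (fun j => psi (q * j)%nat) k D'.
Proof.
  intros Hq Hn. assert (Hq1 : (1 <= q)%nat) by (destruct Hq; lia).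
  set (phi := fun n => if Nat.eqb (Nat.gcd n D') 1 then psi n else 0).
  assert (Hr : CS (fun j => psi (q * j)%nat) k D' = sm (fun j => phi (q * S j)%nat) k).
  { unfold CS, phi. apply sm_ext. intros j _.
    assert (Gq : Nat.gcd q D' = 1%nat).
    { rewrite Nat.gcd_comm. apply (cop_prime q); auto. }
    destruct (Nat.eqb_spec (Nat.gcd (S j) D') 1) as [G|G];
    destruct (Nat.eqb_spec (Nat.gcd (q * S j) D') 1) as [G'|G']; auto.
    - exfalso; apply G'. rewrite Nat.gcd_comm. apply cop_mul. rewrite !(Nat.gcd_comm D'). auto.
    - exfalso; apply G. rewrite Nat.gcd_comm in G'. apply cop_mul in G'. rewrite Nat.gcd_comm; tauto. }
  rewrite Hr. unfold CS. rewrite <- (reindex phi q k Hq1), <- sm_minus.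
  apply sm_ext. intros i _. unfold phi.
  destruct (Nat.eqb_spec (S i mod q) 0) as [E|E].
  - apply Nat.Lcm0.mod_divide in E.
    destruct (Nat.eqb_spec (Nat.gcd (S i) (q * D')) 1) as [G|G].
    + apply cop_mul in G. destruct G as [G _]. apply (cop_prime q) in G; tauto.
    + destruct (Nat.eqb (Nat.gcd (S i) D') 1); lra.
  - assert (Gq : Nat.gcd (S i) q = 1%nat).
    { apply (cop_prime q); auto. intros Hd. apply E. apply Nat.Lcm0.mod_divide; auto. }
    destruct (Nat.eqb_spec (Nat.gcd (S i) (q * D')) 1) as [G|G];
    destruct (Nat.eqb_spec (Nat.gcd (S i) D') 1) as [G'|G']; try lra.
    + apply cop_mul in G; tauto.
    + exfalso; apply G. apply cop_mul; auto.
Qed.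

Lemma rec_same psi q D' m : nprime q -> Nat.divide q D' ->
  CS psi m (q * D') = CS psi m D'.
Proof.
  intros Hq Hd. unfold CS. apply sm_ext. intros i _.
  destruct (Nat.eqb_spec (Nat.gcd (S i) (q * D')) 1) as [G|G];
  destruct (Nat.eqb_spec (Nat.gcd (S i) D') 1) as [G'|G']; auto.
  - apply cop_mul in G; tauto.
  - exfalso. apply G. apply cop_mul. split; auto. apply (cop_prime q); auto.
    intros Hqi. assert (Nat.divide q 1) by (rewrite <- G'; apply Nat.gcd_greatest; auto).
    apply Nat.divide_1_r in H. destruct Hq; lia.
Qed.


Lemma exists_prime_div D : (2 <= D)%nat -> exists q, nprime q /\ Nat.divide q D.
Proof.
  induction D as [D IH] using lt_wf_ind. intros HD.
  destruct (classic (nprime D)) as [H|H]; [exists D; split; auto; apply Nat.divide_refl|].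
  assert (exists d, Nat.divide d D /\ d <> 1%nat /\ d <> D) as [d [Hd [H1 H2]]].
  { apply NNPP. intros Hn. apply H. split; auto. intros d Hd.
    destruct (Nat.eq_dec d 1); auto. destruct (Nat.eq_dec d D); auto.
    exfalso; apply Hn; exists d; auto. }
  assert (d <> 0%nat) by (intros ->; destruct Hd as [c Hc]; lia).
  assert (d <= D)%nat by (apply Nat.divide_pos_le; auto; lia).
  destruct (IH d ltac:(lia) ltac:(lia)) as [q [Hq Hqd]].
  exists q; split; auto. eapply Nat.divide_trans; eauto.
Qed.

Definition bb (r D : nat) : nat := if Nat.eqb (D mod r) 0 then 1%nat else 0%nat.
Definition ee (D : nat) : nat := (bb 2 D + bb 3 D + bb 5 D + bb 7 D + bb 11 D + bb 13 D)%nat.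
Definition ss (D : nat) : R := sqrt (sqrt (INR D)).
Definition wt (D : nat) : R := 2 ^ (ee D) * ss D.

Lemma bb_mono r D' D : Nat.divide D' D -> (bb r D' <= bb r D)%nat.
Proof.
  intros Hd. unfold bb. destruct (Nat.eqb_spec (D' mod r) 0) as [E|E]; [|lia].
  apply Nat.Lcm0.mod_divide in E. assert (Nat.divide r D) by (eapply Nat.divide_trans; eauto).
  apply Nat.Lcm0.mod_divide in H. rewrite H. simpl. lia.
Qed.

Lemma ee_le6 D : (ee D <= 6)%nat.
Proof.
  assert (H : forall r, (bb r D <= 1)%nat) by (intros r; unfold bb; destruct Nat.eqb; lia).
  unfold ee. pose proof (H 2%nat). pose proof (H 3%nat). pose proof (H 5%nat).
  pose proof (H 7%nat). pose proof (H 11%nat). pose proof (H 13%nat). lia.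
Qed.

Lemma ss_mono a b : (a <= b)%nat -> ss a <= ss b.
Proof. intros H. unfold ss. apply sqrt_le_1_alt, sqrt_le_1_alt, le_INR; auto. Qed.

Lemma ss_pos a : 0 <= ss a.
Proof. apply sqrt_pos. Qed.

Lemma ss_16 a : 2 * ss a <= ss (16 * a).
Proof.
  unfold ss. rewrite mult_INR.
  assert (E1 : sqrt (INR 16) = 4).
  { replace (INR 16) with (4 * 4) by (simpl; ring). apply sqrt_square; lra. }
  assert (E2 : sqrt 4 = 2).
  { replace 4 with (2 * 2) by ring. apply sqrt_square; lra. }
  rewrite sqrt_mult_alt, E1, sqrt_mult_alt, E2 by (try apply pos_INR; lra). lra.
Qed.

Lemma wt_mono D' D : Nat.divide D' D -> (D' <= D)%nat -> wt D' <= wt D.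
Proof.
  intros Hd Hle. unfold wt.
  assert (2 ^ ee D' <= 2 ^ ee D).
  { apply Rle_pow; [lra|]. unfold ee. pose proof (bb_mono 2 _ _ Hd). pose proof (bb_mono 3 _ _ Hd).
    pose proof (bb_mono 5 _ _ Hd). pose proof (bb_mono 7 _ _ Hd). pose proof (bb_mono 11 _ _ Hd).
    pose proof (bb_mono 13 _ _ Hd). lia. }
  pose proof (ss_mono _ _ Hle). pose proof (ss_pos D'). pose proof (pow_lt 2 (ee D') ltac:(lra)). nra.
Qed.

Ltac dv := first [exists 1%nat; reflexivity | exists 2%nat; reflexivity | exists 3%nat; reflexivity
  | exists 4%nat; reflexivity | exists 5%nat; reflexivity | exists 6%nat; reflexivity | exists 7%nat; reflexivity].

Lemma small_prime q : nprime q -> (q < 16)%nat ->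
  q = 2%nat \/ q = 3%nat \/ q = 5%nat \/ q = 7%nat \/ q = 11%nat \/ q = 13%nat.
Proof.
  intros [H2 Hd] H16.
  do 16 (destruct q as [|q]; [first [lia | (exfalso; first
    [ destruct (Hd 2%nat ltac:(dv)); lia | destruct (Hd 3%nat ltac:(dv)); lia ]) ]|]).
  lia.
Qed.

Lemma wt_step q D' : nprime q -> ~ Nat.divide q D' -> (1 <= D')%nat -> 2 * wt D' <= wt (q * D').
Proof.
  intros Hq Hn HD'. unfold wt.
  assert (Hd : Nat.divide D' (q * D')) by (apply Nat.divide_mul_r, Nat.divide_refl).
  pose proof (bb_mono 2 _ _ Hd). pose proof (bb_mono 3 _ _ Hd).
  pose proof (bb_mono 5 _ _ Hd). pose proof (bb_mono 7 _ _ Hd). pose proof (bb_mono 11 _ _ Hd).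
  pose proof (bb_mono 13 _ _ Hd).
  pose proof (ss_pos D'). pose proof (pow_lt 2 (ee D') ltac:(lra)).
  destruct (Nat.lt_ge_cases q 16) as [Hs|Hb].
  - assert (Hq1 : bb q (q * D') = 1%nat).
    { unfold bb. rewrite Nat.mul_comm, Nat.Div0.mod_mul. reflexivity. }
    assert (Hq0 : bb q D' = 0%nat).
    { unfold bb. destruct (Nat.eqb_spec (D' mod q) 0) as [E|]; auto.
      apply Nat.Lcm0.mod_divide in E. tauto. }
    assert (2 ^ S (ee D') <= 2 ^ ee (q * D')).
    { apply Rle_pow; [lra|]. unfold ee.
      destruct (small_prime q Hq Hs) as [E|[E|[E|[E|[E|E] ] ] ] ]; subst q; lia. }
    assert (ss D' <= ss (q * D')) by (apply ss_mono; destruct Hq; nia).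
    simpl in H7. nra.
  - assert (2 ^ ee D' <= 2 ^ ee (q * D')).
    { apply Rle_pow; [lra|]. unfold ee. lia. }
    assert (2 * ss D' <= ss (q * D')).
    { eapply Rle_trans; [apply ss_16|]. apply ss_mono. nia. }
    nra.
Qed.


Section Main.
Variable p s : nat.
Hypothesis Hp : nprime p.
Hypothesis Hs : ~ Nat.divide p s.

Definition psc h n := Ec p (s * h ^ n).
Definition pss h n := Es p (s * h ^ n).

Lemma main D : (1 <= D)%nat -> forall h m, (h ^ m mod p = 1)%nat -> (1 <= m)%nat ->
  (forall k, (1 <= k)%nat -> (k < m)%nat -> (h ^ k mod p <> 1)%nat) -> Nat.divide D m ->
  Md (CS (psc h) m D) (CS (pss h) m D) <= wt D * sqrt (INR p).
Proof.
  induction D as [D IH] using lt_wf_ind. intros HD h m Hh1 Hm Hord HDm.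
  destruct (Nat.eq_dec D 1) as [->|HD1].
  - assert (E1 : CS (psc h) m 1 = Sc p h m s).
    { unfold CS, Sc. apply sm_ext. intros i _. rewrite gcd_1, Nat.eqb_refl. reflexivity. }
    assert (E2 : CS (pss h) m 1 = Ss p h m s).
    { unfold CS, Ss. apply sm_ext. intros i _. rewrite gcd_1, Nat.eqb_refl. reflexivity. }
    rewrite E1, E2. assert (W : wt 1 = 1).
    { unfold wt, ee, bb, ss. simpl. rewrite sqrt_1, sqrt_1. ring. }
    rewrite W, Rmult_1_l. apply sub_bound_Md; auto.
  - destruct (exists_prime_div D ltac:(lia)) as [q [Hq [D' HD']]].
    rewrite (Nat.mul_comm D' q) in HD'. subst D.
    assert (Hq2 : (2 <= q)%nat) by (destruct Hq; auto).
    assert (HD'1 : (1 <= D')%nat) by nia.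
    assert (Hqm : Nat.divide q m) by (eapply Nat.divide_trans; [apply Nat.divide_factor_l|exact HDm]).
    destruct Hqm as [k Hk]. rewrite Nat.mul_comm in Hk. subst m.
    assert (HD'k : Nat.divide D' k) by (apply (Nat.mul_divide_cancel_l _ _ q); auto; lia).
    assert (HD'm : Nat.divide D' (q * k)) by (eapply Nat.divide_trans; [exact HD'k|apply Nat.divide_factor_r]).
    assert (Hlt : (D' < q * D')%nat) by nia.
    destruct (classic (Nat.divide q D')) as [Hqd|Hqd].
    + rewrite !rec_same by auto.
      eapply Rle_trans; [apply (IH D' Hlt HD'1 h (q * k)%nat); auto|].
      apply Rmult_le_compat_r; [apply sqrt_pos|]. apply wt_mono; [apply Nat.divide_factor_r|lia].
    + rewrite !rec_split by auto.
      eapply Rle_trans; [apply Md_tri|].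
      assert (A := IH D' Hlt HD'1 h (q * k)%nat Hh1 Hm Hord HD'm).
      assert (Hk1 : (1 <= k)%nat) by nia.
      assert (B : Md (CS (psc (h ^ q)) k D') (CS (pss (h ^ q)) k D') <= wt D' * sqrt (INR p)).
      { apply IH; auto.
        - rewrite <- Nat.pow_mul_r. auto.
        - intros j Hj1 Hj2. rewrite <- Nat.pow_mul_r. apply Hord; nia. }
      assert (E1 : CS (fun j => psc h (q * j)) k D' = CS (psc (h ^ q)) k D').
      { apply CS_ext. intros n. unfold psc. rewrite Nat.pow_mul_r. reflexivity. }
      assert (E2 : CS (fun j => pss h (q * j)) k D' = CS (pss (h ^ q)) k D').
      { apply CS_ext. intros n. unfold pss. rewrite Nat.pow_mul_r. reflexivity. }
      rewrite E1, E2.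
      assert (W := wt_step q D' Hq Hqd HD'1). pose proof (sqrt_pos (INR p)). nra.
Qed.

End Main.

Lemma zprime_nprime p : prime (Z.of_nat p) -> nprime p.
Proof.
  intros Hp. pose proof (prime_ge_2 _ Hp). split; [lia|].
  intros d Hd. destruct (Nat.eq_dec d 1); auto. destruct (Nat.eq_dec d p); auto.
  exfalso. assert (d <> 0%nat) by (intros ->; destruct Hd as [c Hc]; lia).
  assert (d <= p)%nat by (apply Nat.divide_pos_le; auto; lia).
  inversion Hp as [_ H2]. specialize (H2 (Z.of_nat d) ltac:(lia)).
  destruct H2 as [_ _ H3].
  assert (Hz : (Z.of_nat d | Z.of_nat p)%Z).
  { destruct Hd as [c Hc]. exists (Z.of_nat c). rewrite Hc, Nat2Z.inj_mul. reflexivity. }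
  specialize (H3 (Z.of_nat d) (Z.divide_refl _) Hz).
  apply Z.divide_1_r_nonneg in H3; lia.
Qed.


Lemma final_bound p : (2 <= p)%nat -> wt (p - 1) * sqrt (INR p) <= 64 * Rpower (INR p) (/2 * /2 + /2).
Proof.
  intros H2. assert (Hp : 0 < INR p) by (apply lt_0_INR; lia).
  rewrite Rpower_plus, <- Rpower_mult, !Rpower_sqrt; auto.
  2:{ unfold Rpower. apply exp_pos. }
  unfold wt. change (sqrt (sqrt (INR p))) with (ss p).
  assert (A : 2 ^ ee (p - 1) <= 64).
  { replace 64 with (2 ^ 6) by (simpl; ring). apply Rle_pow; [lra|apply ee_le6]. }
  assert (B : ss (p - 1) <= ss p) by (apply ss_mono; lia).
  pose proof (ss_pos (p - 1)). pose proof (sqrt_pos (INR p)). pose proof (pow_lt 2 (ee (p - 1)) ltac:(lra)).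
  assert (2 ^ ee (p - 1) * ss (p - 1) <= 64 * ss p) by nra. nra.
Qed.

Theorem lemma3p1 :
  forall eps : R, 0 < eps < 1 / 16 ->
  exists (C : R) (p0 : nat),
    forall p t s : nat,
      prime (Z.of_nat p) -> (p0 <= p)%nat ->
      prim_root p t ->
      (1 <= s <= p - 1)%nat -> Nat.gcd s (p - 1) = 1%nat ->
      expsum_abs p s t <= C * Rpower (INR p) (1 - eps).
Proof.
  intros eps Heps. exists 64, 2%nat. intros p t s Hp Hp0 Hpr Hs Hg.
  pose proof (zprime_nprime p Hp) as np. destruct Hpr as [_ [Ht1 Hord]].
  assert (Hsd : ~ Nat.divide p s).
  { intros Hd. apply Nat.divide_pos_le in Hd; lia. }
  assert (Ere : expsum_re p s t = CS (psc p s t) (p - 1) (p - 1)).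
  { unfold expsum_re, idx. rewrite fold_filter. unfold CS. apply sm_ext. intros i _.
    simpl (1 + i)%nat. destruct Nat.eqb; auto. unfold psc, Ec. rewrite mult_INR. replace (2 * PI * INR s * INR (t ^ S i)) with (2 * PI * (INR s * INR (t ^ S i))) by ring. reflexivity. }
  assert (Eim : expsum_im p s t = CS (pss p s t) (p - 1) (p - 1)).
  { unfold expsum_im, idx. rewrite fold_filter. unfold CS. apply sm_ext. intros i _.
    simpl (1 + i)%nat. destruct Nat.eqb; auto. unfold pss, Es. rewrite mult_INR. replace (2 * PI * INR s * INR (t ^ S i)) with (2 * PI * (INR s * INR (t ^ S i))) by ring. reflexivity. }
  unfold expsum_abs. change (sqrt (expsum_re p s t ^ 2 + expsum_im p s t ^ 2))
    with (Md (expsum_re p s t) (expsum_im p s t)).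
  rewrite Ere, Eim.
  eapply Rle_trans.
  { apply (main p s np Hsd (p - 1)); try lia; auto. apply Nat.divide_refl. }
  eapply Rle_trans; [apply final_bound; lia|].
  apply Rmult_le_compat_l; [lra|]. apply Rle_Rpower.
  - replace 1 with (INR 1) by reflexivity. apply le_INR. lia.
  - lra.
Qed.
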